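(* Let $n$ and $m$ be integers with $n\ge m\ge3$, and let $M=(m_1,\dots,m_t)$ be a list of integers with $m_i\ge2$ for all $i$ and $\sum M=m$. Then there is a subgraph $G$ of $2K_n$ such that both of the following hold: - $G$ admits a decomposition into cycles of lengths $m_1,\dots,m_t$ together with one $n$-cycle; - $G$ admits a decomposition into one $m$-cycle and one $n$-cycle.
   Context: Graphs may have multiple edges but no loops. $2K_n$ is the complete multigraph on $n$ vertices with two edges joining each pair of distinct vertices. For $m\ge2$, an $m$-cycle is a cycle with $m$ edges; a $2$-cycle consists of two parallel edges. *)

(* Defs.v *)
From mathcomp Require Import all_boot.
Set Implicit Arguments. Unset Strict Implicit. Unset Printing Implicit Defensive.

(* A multigraph on vertex set 'I_n is given by its edge-multiplicity function
   G x y = number of edges joining x and y. *)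
Definition multigraph (n : nat) := 'I_n -> 'I_n -> nat.

Definition sub_2Kn (n : nat) (G : multigraph n) : Prop :=
  (forall x y, G x y = G y x) /\ (forall x, G x x = 0) /\
  (forall x y, G x y <= 2).

(* A cycle is given by its cyclic sequence of (distinct) vertices
   [v_0; ...; v_(k-1)], k >= 2; its edges are {v_i, v_(i+1 mod k)}.
   For k = 2 this yields two parallel edges between v_0 and v_1. *)
Definition is_cycle (n : nat) (c : seq 'I_n) : bool := uniq c && (2 <= size c).

Definition cycle_mult (n : nat) (c : seq 'I_n) (x y : 'I_n) : nat :=
  count (fun p : 'I_n * 'I_n =>
           ((p.1 == x) && (p.2 == y)) || ((p.1 == y) && (p.2 == x)))
        (zip c (rot 1 c)).

Definition decomposes_into (n : nat) (G : multigraph n) (L : seq nat) : Prop :=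
  exists cs : seq (seq 'I_n),
    all (@is_cycle n) cs /\ map size cs = L /\
    (forall x y, G x y = sumn [seq cycle_mult c x y | c <- cs]).

(* Main.v *)
Require Import Defs.
From mathcomp Require Import all_boot.
From mathcomp Require Import zify.
Set Implicit Arguments. Unset Strict Implicit. Unset Printing Implicit Defensive.

Ltac clia := repeat match goal with H : _ |- _ => clear H end; lia.

Section Gen.
Variable T : eqType.
Implicit Types (a b x y : T) (s c : seq T).

Definition sp x y (p : T * T) : bool :=
  ((p.1 == x) && (p.2 == y)) || ((p.1 == y) && (p.2 == x)).
Definition mult c x y := count (sp x y) (zip c (rot 1 c)).
Definition E x y a b : nat := sp x y (a, b).
Fixpoint pm x y a s : nat :=
  match s with [::] => 0 | b :: s' => E x y a b + pm x y b s' end.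

Lemma Esym x y a b : E x y a b = E x y b a.
Proof. by rewrite /E /sp /=; case: (a == x); case: (b == y); case: (a == y); case: (b==x). Qed.

Lemma Esymxy x y a b : E x y a b = E y x a b.
Proof. by rewrite /E /sp /= orbC. Qed.

Lemma zip_rc x y a s z :
  count (sp x y) (zip (a :: s) (rcons s z)) = pm x y a s + E x y (last a s) z.
Proof.
elim: s a => [|b s IH] a /=; first by rewrite /E addn0.
by rewrite IH addnA.
Qed.

Lemma mult_cons x y a s : mult (a :: s) x y = pm x y a s + E x y (last a s) a.
Proof. by rewrite /mult rot1_cons zip_rc. Qed.

Lemma pm_cat x y a s1 b s2 :
  pm x y a (s1 ++ b :: s2) = pm x y a s1 + E x y (last a s1) b + pm x y b s2.
Proof. elim: s1 a => [|c s1 IH] a /=; first by rewrite addnC.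
by rewrite IH !addnA. Qed.

Lemma pm_rcons x y a s z : pm x y a (rcons s z) = pm x y a s + E x y (last a s) z.
Proof. by rewrite -cats1 pm_cat /= addn0. Qed.

Lemma last_rb a s : last (last a s) (rev (belast a s)) = a.
Proof. by case: s => [|b s] //=; rewrite rev_cons last_rcons. Qed.

Lemma pm_rev x y a s : pm x y (last a s) (rev (belast a s)) = pm x y a s.
Proof.
elim: s a => [|b s IH] a //=.
by rewrite rev_cons pm_rcons IH last_rb Esym addnC.
Qed.

Lemma rev_lb a s : rev (a :: s) = last a s :: rev (belast a s).
Proof. by rewrite lastI rev_rcons. Qed.

Lemma mult_rot x y a s1 b s2 :
  mult (a :: s1 ++ b :: s2) x y = mult (b :: s2 ++ a :: s1) x y.
Proof.
rewrite !mult_cons !pm_cat !last_cat /=; lia.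
Qed.

Lemma E0 x y a b : a != x -> b != x -> E x y a b = 0.
Proof. by move=> ha hb; rewrite /E /sp /= (negbTE ha) (negbTE hb) andbF. Qed.

Lemma pm0 x y a s : x \notin a :: s -> pm x y a s = 0.
Proof.
elim: s a => [|b s IH] a //=; rewrite !inE !negb_or => /and3P[ha hb hs].
rewrite IH ?inE ?negb_or ?hb //= E0 // eq_sym //.
Qed.

Lemma mult_at x y c : uniq c -> x \in c ->
  exists t, [/\ uniq (x :: t), size t = (size c).-1 & mult c x y = mult (x::t) x y].
Proof.
case: c => [//|a s] uc; rewrite inE => /orP[/eqP->|xs]; first by exists s.
case/splitPr: xs uc => s1 s2 uc.
exists (s2 ++ a :: s1); split.
- rewrite (perm_uniq (s2:=a :: s1 ++ x :: s2)) //.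
  apply/permP => p /=; rewrite !count_cat /=; lia.
- by rewrite /= !size_cat /=; lia.
- by rewrite mult_rot.
Qed.

Lemma mult_out x y c : x \notin c -> mult c x y = 0.
Proof.
case: c => [//|a s] xc; rewrite mult_cons pm0 // E0 //.
  by apply: contra xc => /eqP <-; apply: mem_last.
by apply: contra xc => /eqP <-; rewrite inE eqxx.
Qed.

Lemma mult_le1 x y c : x != y -> uniq c -> 3 <= size c -> mult c x y <= 1.
Proof.
move=> xy uc sc; case: (boolP (x \in c)) => xc; last by rewrite mult_out.
have [t [ut st ->]] := mult_at y uc xc.
have : 2 <= size t by rewrite st; move: sc; case: (size c) => //= k; lia.
case: t ut {st} => [|b [|c1 t']] ut //= _.
have h0 : pm x y b (c1 :: t') = 0 by apply: pm0; case/andP: ut.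
rewrite mult_cons /=; rewrite /= in h0; rewrite h0 addn0.
have hb : b != last c1 t'.
  move: ut => /= /and3P[_ bt _].
  by apply: contra bt => /eqP ->; apply: mem_last.
rewrite /E /sp /= eqxx (negbTE xy) /= !andbF /= andbT.
case: (eqVneq b y) hb => [->|] //= hb.
  by rewrite eq_sym (negbTE hb).
by move=> _; case: (_ == _).
Qed.

Lemma mult_xx x c : uniq c -> 2 <= size c -> mult c x x = 0.
Proof.
move=> uc sc; case: (boolP (x \in c)) => xc; last by rewrite mult_out.
have [t [ut st ->]] := mult_at x uc xc.
have : 1 <= size t by rewrite st; move: sc; case: (size c) => //= k; lia.
case: t ut {st} => [|b t'] ut //= _.
have h0 : pm x x b t' = 0 by apply: pm0; case/andP: ut.
rewrite mult_cons /=; rewrite /= in h0; rewrite h0 addn0.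
move: ut => /= /andP[]; rewrite inE negb_or => /andP[xb xt] _.
rewrite /E /sp /= eqxx /= orbb (eq_sym b) (negbTE xb) /= andbT.
rewrite orbb add0n; apply/eqP; rewrite eqb0; apply/negP => /eqP hl.
by have := mem_last b t'; rewrite hl inE (negbTE xt) orbF (negbTE xb).
Qed.

Lemma mult_sym x y c : mult c x y = mult c y x.
Proof. by apply: eq_count => p; rewrite /sp orbC. Qed.


Lemma gen (M : seq nat) : M != [::] -> all (fun k => 2 <= k) M ->
  forall V : seq T, uniq V -> sumn M <= size V ->
  exists C C' D (cs : seq (seq T)),
  [/\ perm_eq C V, perm_eq C' V, uniq D, size D = sumn M & {subset D <= V}] /\
  all (fun c => uniq c && (2 <= size c)) cs /\ map size cs = M /\
  (forall x y, mult C x y + mult D x y = mult C' x y + sumn [seq mult c x y | c <- cs]) /\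
  exists w u d0 dl C1 P1 Q1 D1, [/\ C = w :: C1, last w C1 = u,
     C' = (d0 :: P1) ++ (w :: Q1), last d0 P1 = u &
     [/\ last w Q1 = dl, D = d0 :: D1 & last d0 D1 = dl]].
Proof.
elim: M => [//|m1 M' IH] _ /= /andP[hm1 hM'] V uV hs.
have HV : V = take m1 V ++ drop m1 V by rewrite cat_take_drop.
have stk : size (take m1 V) = m1 by apply: size_takel; lia.
have [s [r0 [r1 hb]]] : exists (s r0 : T) (r1 : seq T), take m1 V = s :: r0 :: r1.
  by move: stk; case: (take m1 V) => [|a [|b l]] /= h; [lia | lia | exists a, b, l].
set V' := drop m1 V in HV.
have uV' : uniq V' := drop_uniq m1 uV.
have sV' : size V' = size V - m1 by rewrite size_drop.
have mV' : {subset V' <= V} by move=> z; apply: mem_drop.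
clearbody V'.
have ub : uniq (s :: r0 :: r1) by rewrite -hb; apply: take_uniq.
have mb : {subset s :: r0 :: r1 <= V} by move=> z; rewrite -hb; apply: mem_take.
have dis : ~~ has (mem (s :: r0 :: r1)) V'.
  by move: uV; rewrite HV hb cat_uniq => /and3P[].
case: M' IH hM' hs => [|m2 M''] IH hM' hs.
  exists (r0 :: r1 ++ s :: V'), ((s :: V') ++ (r0 :: r1)), (s :: r0 :: r1), [:: s :: r0 :: r1].
  split; first split.
  - rewrite HV hb; apply/permP => p /=; rewrite !count_cat /=; lia.
  - rewrite HV hb; apply/permP => p /=; rewrite !count_cat /=; lia.
  - exact: ub.
  - by rewrite -hb stk addn0.
  - exact: mb.
  split; first by rewrite /= andbT; apply/andP; split.
  split; first by move: stk; rewrite hb /= => ->.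
  split; first by move=> x y; rewrite /= mult_rot; lia.
  exists r0, (last s V'), s, (last r0 r1), (r1 ++ s :: V'), V', r1, (r0 :: r1).
  by split; rewrite ?last_cat.
have hs' : sumn [:: m2 & M''] <= size V' by lia.
have [C [C' [D [cs [[pC pC' uD sD subD] [acs [mcs [Eq]]]]]]]] := IH isT hM' V' uV' hs'.
case=> [w [u [d0 [dl [C1 [P1 [Q1 [D1 [eC hu eC' hP [hQ eD hD]]]]]]]]]].
exists (C ++ s :: rev (r0 :: r1)), ((s :: (rev (d0 :: P1) ++ rev (r0 :: r1))) ++ (w :: Q1)),
  (s :: (r0 :: r1 ++ D)), ((s :: r0 :: r1) :: cs).
have cC : forall p, count p C = count p V' by apply/permP.
have cC' : forall p, count p C' = count p V' by apply/permP.
split; first split.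
- rewrite HV hb; apply/permP => p.
  rewrite !count_cat /= count_rev cC /=. clia.
- rewrite HV hb; apply/permP => p; move: (cC' p); rewrite eC'.
  rewrite !count_cat /= !count_cat !count_rev /=; clia.
- rewrite (_ : s :: r0 :: r1 ++ D = (s :: r0 :: r1) ++ D) // cat_uniq ub uD andbT /=; apply/hasPn => z zD.
  by apply: (hasPn dis); apply: subD.
- by rewrite /= size_cat sD -stk hb.
- move=> z; rewrite (_ : s :: r0 :: r1 ++ D = (s :: r0 :: r1) ++ D) // mem_cat => /orP[/mb //|/subD]; apply: mV'.
split; first by rewrite /= acs andbT; apply/andP; split.
split; first by rewrite /= mcs -stk hb.
split.
  move=> x y; move: (Eq x y); rewrite eC eC' eD /=.
  rewrite -cat_cons !rev_lb !mult_cons.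
  do 4 rewrite ?pm_cat /=.
  rewrite ?last_cat /= ?pm_rev ?last_rb ?last_cat /= ?last_rb hu hP hQ hD.
  rewrite (Esym x y u s) (Esym x y (last r0 r1) d0) (Esym x y (last r0 r1) s); clia.
exists w, r0, s, dl, (C1 ++ s :: rev (r0 :: r1)), (rev (d0 :: P1) ++ rev (r0 :: r1)), Q1, (r0 :: r1 ++ D).
split=> //.
- by rewrite eC.
- by rewrite last_cat /= rev_cons last_rcons.
- by rewrite last_cat (rev_cons r0) last_rcons.
- by split=> //; rewrite /= last_cat eD /= hD.

Qed.
End Gen.

Lemma cmE n (c : seq 'I_n) x y : cycle_mult c x y = mult c x y.
Proof. by []. Qed.

Theorem mainTheorem15 (n m : nat) (M : seq nat) :
  3 <= m -> m <= n -> all (fun k => 2 <= k) M -> sumn M = m ->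
  exists G : multigraph n,
    sub_2Kn G /\ decomposes_into G (rcons M n) /\ decomposes_into G [:: m; n].
Proof.
move=> hm hmn hM hsum.
have Mn : M != [::] by case: M hsum hM => //= hs; move: hm; rewrite -hs.
have hV : sumn M <= size (enum 'I_n) by rewrite size_enum_ord hsum.
have [C [C' [D [cs [[pC pC' uD sD _] [acs [mcs [Eq _]]]]]]]] :=
  gen Mn hM (enum_uniq 'I_n) hV.
have uC : uniq C by rewrite (perm_uniq pC) enum_uniq.
have uC' : uniq C' by rewrite (perm_uniq pC') enum_uniq.
have sC : size C = n by rewrite (perm_size pC) size_enum_ord.
have sC' : size C' = n by rewrite (perm_size pC') size_enum_ord.
rewrite hsum in sD.
exists (fun x y => mult D x y + mult C x y).
split; [|split].
- split; [|split].
  + by move=> x y; rewrite mult_sym (mult_sym _ _ C).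
  + by move=> x; rewrite !mult_xx //; lia.
  + move=> x y; case: (eqVneq x y) => [->|xy].
      by rewrite !mult_xx //; lia.
    have := mult_le1 xy uD; have := mult_le1 xy uC.
    rewrite sD sC => h1 h2; have := h1 (leq_trans hm hmn); have := h2 hm; move=> a b; exact: (leq_add a b).
- exists (rcons cs C'); split; [|split].
  + rewrite all_rcons acs andbT /is_cycle uC' sC'; lia.
  + by rewrite map_rcons mcs sC'.
  + move=> x y; rewrite map_rcons -cats1 sumn_cat /= !cmE.
    have e : [seq cycle_mult c x y | c <- cs] = [seq mult c x y | c <- cs] by [].
    by rewrite e addn0 [mult D x y + _]addnC Eq addnC.
- exists [:: D; C]; split; [|split].
  + by rewrite /= /is_cycle uD uC sD sC; apply/and3P; split=> //; lia.
  + by rewrite /= sD sC.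
  + by move=> x y /=; rewrite addn0.
Qed.
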